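(* Let $G$ be a simplicial group and $c\in C_n(EG)$. (i) For any $0\le k\le n+1$, $P^{n+1}_k(Sc)=e_0\otimes Sc$ if $k=0$, and $P^{n+1}_k(Sc)=(S\otimes1)P^n_{k-1}(c)$ if $k>0$. (ii) $\Delta\,Sc=(S\otimes1)\,\Delta c+e_0\otimes Sc$.
   Context: Chains are normalized, with Alexander–Whitney diagonal $\Delta$. $EG$ is the simplicial set with $p$-simplices $(g_p,[g_{p-1},\dots,g_0])\in G_p\times G_{p-1}\times\dots\times G_0$, faces $\partial_k(g_p,[g_{p-1},\dots,g_0])=(\partial_kg_p,[\partial_{k-1}g_{p-1},\dots,\partial_1g_{p-k+1},(\partial_0g_{p-k})g_{p-k-1},g_{p-k-2},\dots,g_0])$ (for $k=0$: $((\partial_0g_p)g_{p-1},[g_{p-2},\dots,g_0])$; for $k=p$: $(\partial_pg_p,[\partial_{p-1}g_{p-1},\dots,\partial_1g_1])$) and degeneracies $s_k(g_p,[\dots])=(s_kg_p,[s_{k-1}g_{p-1},\dots,s_0g_{p-k},1_{p-k},g_{p-k-1},\dots,g_0])$; $e_0=(1_0,[\,])$. $S\colon EG_p\to EG_{p+1}$, $S(g_p,[g_{p-1},\dots,g_0])=(1_{p+1},[g_p,g_{p-1},\dots,g_0])$, extended linearly to $C(EG)$. $P^n_k\colon C_n\to C_k\otimes C_{n-k}$, $\sigma\mapsto\sigma(0,\dots,k)\otimes\sigma(k,\dots,n)$. *)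

(* Defs.v *)
From mathcomp Require Import all_boot all_algebra.
Unset Strict Implicit. Unset Printing Implicit Defensive.
Import GRing.Theory.
Local Open Scope ring_scope.

Record simplicial_group := SimplicialGroup {
  sg_car :> nat -> Type;
  sg_mul : forall p, sg_car p -> sg_car p -> sg_car p;
  sg_one : forall p, sg_car p;
  sg_inv : forall p, sg_car p -> sg_car p;
  sg_mulA : forall p (x y z : sg_car p),
      sg_mul p x (sg_mul p y z) = sg_mul p (sg_mul p x y) z;
  sg_mul1g : forall p (x : sg_car p), sg_mul p (sg_one p) x = x;
  sg_mulVg : forall p (x : sg_car p), sg_mul p (sg_inv p x) x = sg_one p;
  sg_d : forall p, nat -> sg_car p.+1 -> sg_car p;
  sg_s : forall p, nat -> sg_car p -> sg_car p.+1;
  sg_dM : forall p i (x y : sg_car p.+1), (i <= p.+1)%N ->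
      sg_d p i (sg_mul _ x y) = sg_mul _ (sg_d p i x) (sg_d p i y);
  sg_sM : forall p i (x y : sg_car p), (i <= p)%N ->
      sg_s p i (sg_mul _ x y) = sg_mul _ (sg_s p i x) (sg_s p i y);
  sg_dd : forall p i j (x : sg_car p.+2), (i < j)%N -> (j <= p.+2)%N ->
      sg_d p i (sg_d p.+1 j x) = sg_d p j.-1 (sg_d p.+1 i x);
  sg_ds_lt : forall p i j (x : sg_car p.+1), (i < j)%N -> (j <= p.+1)%N ->
      sg_d p.+1 i (sg_s p.+1 j x) = sg_s p j.-1 (sg_d p i x);
  sg_ds_eq : forall p j (x : sg_car p), (j <= p)%N -> sg_d p j (sg_s p j x) = x;
  sg_ds_eqS : forall p j (x : sg_car p), (j <= p)%N -> sg_d p j.+1 (sg_s p j x) = x;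
  sg_ds_gt : forall p i j (x : sg_car p.+1), (j.+1 < i)%N -> (i <= p.+2)%N ->
      sg_d p.+1 i (sg_s p.+1 j x) = sg_s p j (sg_d p i.-1 x);
  sg_ss : forall p i j (x : sg_car p), (i <= j)%N -> (j <= p)%N ->
      sg_s p.+1 i (sg_s p j x) = sg_s p.+1 j.+1 (sg_s p i x)
}.

Arguments sg_mul {s p}.
Arguments sg_one {s}.
Arguments sg_inv {s p}.
Arguments sg_d {s p}.
Arguments sg_s {s p}.

(* The simplicial set EG.  A p-simplex (g_p,[g_{p-1},...,g_0]) is encoded   *)
(* as a dependent family g : forall j, G j whose components of degree > p   *)
(* are 1 (so the encoding is unique).                                       *)
Record EG (G : simplicial_group) (p : nat) := MkEG {
  eg_fun :> forall j, G j;
  eg_top : forall j, (p < j)%N -> eg_fun j = sg_one j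
}.

Arguments MkEG {G p}.
Set Implicit Arguments.

Section EGops.
Variable G : simplicial_group.

(* k-th face  EG_{p+1} -> EG_p :                                            *)
(*  d_k(g_{p+1},[g_p,...,g_0]) =                                            *)
(*   (d_k g_{p+1},[d_{k-1} g_p,...,d_1 g_{p-k+2},(d_0 g_{p-k+1}) g_{p-k},     *)
(*    g_{p-k-1},...,g_0]);  componentwise, in degree j <= p:                  *)
(*   j + k > p : d_{j+k-p} g_{j+1};  j + k = p : (d_0 g_{j+1}) g_j;           *)
(*   j + k < p : g_j.                                                        *)
Definition face_fun (p k : nat) (g : forall j, G j) : forall j, G j :=
  fun j =>
    if (p < j)%N then sg_one j
    else if (p < j + k)%N then sg_d (j + k - p) (g j.+1)
    else if j + k == p then sg_mul (sg_d 0 (g j.+1)) (g j)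
    else g j.

Lemma face_top p k (x : EG G p.+1) j : (p < j)%N -> face_fun p k x j = sg_one j.
Proof. by rewrite /face_fun => ->. Qed.

Definition face (p k : nat) (x : EG G p.+1) : EG G p :=
  MkEG (face_fun p k x) (@face_top p k x).

(* k-th degeneracy EG_p -> EG_{p+1}:                                        *)
(*  s_k(g_p,[...]) = (s_k g_p,[s_{k-1} g_{p-1},...,s_0 g_{p-k},1_{p-k},      *)
(*                    g_{p-k-1},...,g_0]);  componentwise in degree j'<=p+1:  *)
(*   j' + k > p : s_{j'+k-p-1} g_{j'-1};  j' + k = p : 1;  j' + k < p : g_j'. *)
Definition degen_fun (p k : nat) (g : forall j, G j) : forall j, G j :=
  fun j =>
    if (p.+1 < j)%N then sg_one j
    else if (p < j + k)%N then
      match j return G j with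
      | 0 => sg_one 0
      | j'.+1 => sg_s (j'.+1 + k - p.+1) (g j')
      end
    else if j + k == p then sg_one j
    else g j.

Lemma degen_top p k (x : EG G p) j : (p.+1 < j)%N -> degen_fun p k x j = sg_one j.
Proof. by rewrite /degen_fun => ->. Qed.

Definition degen (p k : nat) (x : EG G p) : EG G p.+1 :=
  MkEG (degen_fun p k x) (@degen_top p k x).

Definition degenerate (p : nat) (x : EG G p) : Prop :=
  match p return EG G p -> Prop with
  | 0 => fun _ => False
  | q.+1 => fun x => exists k (y : EG G q), (k <= q)%N /\ degen k y = x
  end x.

(* S : EG_p -> EG_{p+1},  S(g_p,[g_{p-1},...,g_0]) = (1_{p+1},[g_p,...,g_0]) *)
Definition S_fun (p : nat) (g : forall j, G j) : forall j, G j :=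
  fun j => if j == p.+1 then sg_one j else g j.

Lemma S_top p (x : EG G p) j : (p.+1 < j)%N -> S_fun p x j = sg_one j.
Proof.
rewrite /S_fun => h; case: eqP => [->//|_]; apply: eg_top.
exact: ltn_trans (ltnSn p) h.
Qed.

Definition Ssimp (p : nat) (x : EG G p) : EG G p.+1 :=
  MkEG (S_fun p x) (@S_top p x).

Definition one_simplex (p : nat) : EG G p :=
  MkEG (fun j => sg_one j) (fun j _ => erefl).
Definition e0 : EG G 0 := one_simplex 0.

Definition castEG (m n : nat) (h : m = n) (x : EG G m) : EG G n :=
  eq_rect m (EG G) x n h.

(* front face sigma(0,...,k) = d_{k+1} ... d_n sigma  (iterated last faces) *)
Fixpoint front_aux (m k : nat) : EG G (m + k) -> EG G k :=
  match m return EG G (m + k) -> EG G k with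
  | 0 => fun x => x
  | m'.+1 => fun x => @front_aux m' k (face (m' + k).+1 x)
  end.

Definition front (n k : nat) (x : EG G n) : EG G k :=
  (if (k <= n)%N as b return (k <= n)%N = b -> EG G k
   then fun h => @front_aux (n - k) k (castEG (esym (subnK h)) x)
   else fun _ => one_simplex k) erefl.

(* back face sigma(k,...,n) = d_0^k sigma  (iterated 0-th faces) *)
Fixpoint back_aux (k m : nat) : EG G (k + m) -> EG G m :=
  match k return EG G (k + m) -> EG G m with
  | 0 => fun x => x
  | k'.+1 => fun x => @back_aux k' m (face 0 x)
  end.

Definition back (n k : nat) (x : EG G n) : EG G (n - k) :=
  (if (k <= n)%N as b return (k <= n)%N = b -> EG G (n - k)
   then fun h => @back_aux k (n - k) (castEG (esym (subnKC h)) x)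
   else fun _ => one_simplex (n - k)) erefl.

(* Chains.  An n-chain is represented by a formal Z-linear combination of   *)
(* n-simplices; elements of C(EG) (x) C(EG) by formal Z-linear combinations *)
(* of pairs of simplices of arbitrary bidegree (k,l).  Equality in the      *)
(* NORMALIZED tensor product  C^N(EG) (x) C^N(EG) = Z[X x X]/(pairs with a   *)
(* degenerate factor)  is characterized by its universal property: two      *)
(* formal sums are equal iff every bi-additive assignment into an abelian   *)
(* group vanishing on pairs with a degenerate factor takes the same value.  *)
Definition chain (n : nat) := seq (int * EG G n).

Record tgen := TGen { tk : nat; tl : nat; tx : EG G tk; ty : EG G tl }.
Definition tchain := seq (int * tgen).

Definition teval (M : zmodType) (f : forall k l, EG G k -> EG G l -> M)
  (a : tchain) : M :=
  \sum_(t <- a) f _ _ (tx t.2) (ty t.2) *~ t.1.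

Definition tensor_eq (a b : tchain) : Prop :=
  forall (M : zmodType) (f : forall k l, EG G k -> EG G l -> M),
    (forall k l (x : EG G k) (y : EG G l),
        degenerate x \/ degenerate y -> f k l x y = 0) ->
    teval f a = teval f b.

Definition Sch (n : nat) (c : chain n) : chain n.+1 :=
  [seq (t.1, Ssimp t.2) | t <- c].

Definition S_tens (a : tchain) : tchain :=
  [seq (t.1, @TGen (tk t.2).+1 (tl t.2) (Ssimp (tx t.2)) (ty t.2)) | t <- a].

Definition e0_tens (n : nat) (c : chain n) : tchain :=
  [seq (t.1, @TGen 0 n e0 t.2) | t <- c].

Definition P (n k : nat) (c : chain n) : tchain :=
  [seq (t.1, @TGen k (n - k) (front k t.2) (back k t.2)) | t <- c].

Definition AW (n : nat) (c : chain n) : tchain :=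
  flatten [seq P k c | k <- iota 0 n.+1].

End EGops.

(* Main.v *)
Require Import Defs.
From mathcomp Require Import all_boot all_algebra.
From Stdlib Require Import FunctionalExtensionality ProofIrrelevance.
From mathcomp Require Import zify.
Section X.
Local Notation ef x := (eg_fun _ _ x).
Variable G : simplicial_group.

Fixpoint frontf (m k : nat) (g : forall j, G j) : forall j, G j :=
  match m with 0 => g | m'.+1 => frontf m' k (face_fun (m'+k) (m'+k).+1 g) end.
Fixpoint backf (k m : nat) (g : forall j, G j) : forall j, G j :=
  match k with 0 => g | k'.+1 => backf k' m (face_fun (k'+m) 0 g) end.

Lemma eg_ext p (x y : EG G p) : (forall j, x j = y j) -> x = y.
Proof.
case: x => fx hx; case: y => fy hy /= E.
have E' : fx = fy by apply: functional_extensionality_dep.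
subst fy. by rewrite (proof_irrelevance _ hx hy).
Qed.

Lemma cast_fun m n (h : m = n) (x : EG G m) : ef (castEG h x) = ef x.
Proof. by case: n / h. Qed.

Lemma front_aux_fun m k (y : EG G (m + k)) :
  ef (@front_aux G m k y) = frontf m k (ef y).
Proof. by elim: m y => [|m IH] y //=; rewrite IH. Qed.

Lemma back_aux_fun k m (y : EG G (k + m)) :
  ef (@back_aux G k m y) = backf k m (ef y).
Proof. by elim: k y => [|k IH] y //=; rewrite IH. Qed.

Lemma front_fun n k (x : EG G n) (hk : (k <= n)%N) :
  ef (front k x) = frontf (n - k) k (ef x).
Proof.
rewrite /front. move: (erefl (k <= n)%N). rewrite {2 3}hk => e.
by rewrite front_aux_fun cast_fun.
Qed.

Lemma back_fun n k (x : EG G n) (hk : (k <= n)%N) :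
  ef (back k x) = backf k (n - k) (ef x).
Proof.
rewrite /back. move: (erefl (k <= n)%N). rewrite {2 3}hk => e.
by rewrite back_aux_fun cast_fun.
Qed.

Lemma mulg_idem p (x : G p) : sg_mul x x = x -> x = sg_one p.
Proof.
move=> E. have := sg_mulVg _ _ x. by rewrite -{2}E sg_mulA sg_mulVg sg_mul1g => ->.
Qed.

Lemma d_one p i : (i <= p.+1)%N -> @sg_d G p i (sg_one p.+1) = sg_one p.
Proof.
move=> hi; apply: mulg_idem. by rewrite -sg_dM // sg_mul1g.
Qed.

Lemma FS p (g : forall j, G j) : face_fun p.+1 p.+2 (S_fun p.+1 g) = S_fun p (face_fun p p.+1 g).
Proof.
apply: functional_extensionality_dep => j.
rewrite /face_fun /S_fun.
case: (ltngtP j p.+1) => hj.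
- have -> : (p.+1 < j + p.+2)%N by lia.
  have -> : (p < j + p.+1)%N by lia.
  have -> : (j.+1 == p.+2) = false by rewrite eqSS; apply/negbTE; rewrite neq_ltn hj.
  have -> : (j + p.+2 - p.+1 = j.+1)%N by lia.
  by have -> : (j + p.+1 - p = j.+1)%N by lia.
- by [].
- subst j.
  have -> : (p.+1 < p.+1 + p.+2)%N by lia.
  have -> : (p.+1 + p.+2 - p.+1 = p.+2)%N by lia.
  by rewrite eqxx d_one.
Qed.

Lemma frontS m k (g : forall j, G j) :
  frontf m k.+1 (S_fun (m + k) g) = S_fun k (frontf m k g).
Proof.
elim: m g => [|m IH] g //=.
by rewrite addnS addSn FS IH.
Qed.

Lemma frontf_last m k (h : forall j, G j) :
  frontf m.+1 k h = face_fun k k.+1 (frontf m k.+1 h).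
Proof.
elim: m h => [|m IH] h //=.
by rewrite -[LHS]/(frontf m.+1 k _) IH addnS addSn.
Qed.

Lemma FB n (g : forall j, G j) : (forall j, (n < j)%N -> g j = sg_one j) ->
  face_fun n 0 (S_fun n g) = g.
Proof.
move=> top; apply: functional_extensionality_dep => j.
rewrite /face_fun /S_fun addn0.
case: (ltngtP n j) => hj.
- by rewrite top.
- have -> : (j + 0%N)%R = j by exact: addn0 j.
  by rewrite (ltn_eqF hj) (ltn_eqF (ltn_trans hj (ltnSn n))).
- subst j. have -> : (n + 0%N)%R = n by exact: addn0 n.
  by rewrite !eqxx (ltn_eqF (ltnSn n)) d_one // sg_mul1g.
Qed.

Lemma front0S n (x : EG G n) : front 0 (Ssimp x) = e0 G.
Proof.
apply: eg_ext => j. rewrite front_fun // subn0 frontf_last.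
have := frontS n 0 (ef x); rewrite addn0 => E.
change (face_fun 0 1 (frontf n 1 (S_fun n (ef x))) j = sg_one j).
rewrite E /face_fun /S_fun.
case: j => [|j] //=. by rewrite d_one.
Qed.

Lemma frontSS n k (x : EG G n) : (k <= n)%N -> front k.+1 (Ssimp x) = Ssimp (front k x).
Proof.
move=> hk; apply: eg_ext => j. rewrite front_fun // subSS /= front_fun //.
have := frontS (n - k) k x. rewrite subnK // => ->. by [].
Qed.

Lemma back0S n (x : EG G n) : back 0 (Ssimp x) = Ssimp x.
Proof. apply: eg_ext => j. by rewrite back_fun. Qed.

Lemma backSS n k (x : EG G n) : (k <= n)%N -> (back k.+1 (Ssimp x) : EG G (n - k)) = back k x.
Proof.
move=> hk; apply: eg_ext => j. rewrite back_fun // back_fun //=.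
rewrite subnKC // FB //. exact: eg_top.
Qed.
End X.

Lemma P0S (G : simplicial_group) n (c : chain G n) : P 0 (Sch c) = e0_tens (Sch c).
Proof.
rewrite /P /e0_tens /Sch -!map_comp; apply: eq_map => [[a y]] /=.
by rewrite front0S back0S.
Qed.

Lemma PSS (G : simplicial_group) n k (c : chain G n) : (k <= n)%N ->
  P k.+1 (Sch c) = S_tens (P k c).
Proof.
move=> hk; rewrite /P /S_tens /Sch -!map_comp; apply: eq_map => [[a y]] /=.
by rewrite frontSS // backSS.
Qed.

Lemma teval_cat (G : simplicial_group) (M : zmodType) (f : forall k l, EG G k -> EG G l -> M) a b :
  teval f (a ++ b) = (teval f a + teval f b)%R.
Proof. by rewrite /teval big_cat. Qed.

Theorem lemma8p2 (G : simplicial_group) (n : nat) (c : chain G n) :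
  (* (i) *)
  (forall k, (k <= n.+1)%N ->
     tensor_eq (P k (Sch c))
       (match k with
        | 0 => e0_tens (Sch c)
        | k'.+1 => S_tens (P k' c)
        end)) /\
  (* (ii) *)
  tensor_eq (AW (Sch c)) (S_tens (AW c) ++ e0_tens (Sch c)).
Proof.
split.
- case=> [|k] hk M f _; first by rewrite P0S.
  by rewrite PSS.
- move=> M f _.
  have L : forall len i, (i + len <= n.+1)%N ->
      flatten [seq P k (Sch c) | k <- iota i.+1 len] = S_tens (flatten [seq P k c | k <- iota i len]).
    elim=> [|len IH] i hi //=.
    rewrite IH; last by rewrite addSnnS.
    rewrite PSS; last by move: hi; rewrite addnS ltnS => /(leq_trans (leq_addr _ _)).
    by rewrite /S_tens map_cat.
  have E : AW (Sch c) = e0_tens (Sch c) ++ S_tens (AW c).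
    by rewrite /AW [iota 0 n.+2]/= [map _ (_ :: _)]/= P0S -(L n.+1 0).
  by rewrite E !teval_cat GRing.addrC.
Qed.
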